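(* Let $A=\prod_{i=1}^n A_i$ with each $A_i\in\{\mathsf P^1,\mathbb F_2\}$, with the product bicharacter. Let $\Gamma\subseteq 2^{[n]}$ and $P=\mathop{\ast}_{\gamma\in\Gamma}P_\gamma$ with each $P_\gamma$ a probability distribution on $A$ vanishing outside $\{e:\operatorname{supp}(e)\subseteq\gamma\}$. Let $E(a)=\sum_{e\in A}\langle a,e\rangle P(e)$ and assume $E(a)\neq0$ for all $a\in A$. Define the canonical moments $F(a)=\prod_{b\le a}E(b)^{\mu(b,a)}$ with $\mu(b,a)=(-1)^{|a|-|b|}$ for $b\le a$. Then (1) $E(a)=\prod_{b\le a}F(b)$ for all $a\in A$; and (2) if $a\in A$ satisfies $\operatorname{supp}(a)\not\subseteq\gamma$ for all $\gamma\in\Gamma$, then $F(a)=1$.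
   Context: Bicharacter: on $\mathsf P^1=\{I,X,Y,Z\}$ (Paulis modulo phase) $\langle a,b\rangle=\pm1$ according to commutation/anticommutation; on $\mathbb F_2$, $\langle x,y\rangle=(-1)^{xy}$; on $A$ the product over coordinates. $\operatorname{supp}(a)=\{i:a_i\neq I\}$, $|a|=|\operatorname{supp}(a)|$. Substring order: $b\le a$ iff for every $i$ either $b_i=I$ or $b_i=a_i$. Convolution: $(f\ast g)(a)=\sum_b f(b)g(ab^{-1})$. *)

(* Defs.v *)
From HB Require Import structures.
From mathcomp Require Import all_boot all_order all_algebra.
Set Implicit Arguments. Unset Strict Implicit. Unset Printing Implicit Defensive.
Import Order.TTheory GRing.Theory Num.Theory.

(* ---------- P^1 = {I,X,Y,Z}: Pauli operators modulo phase ---------- *)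
Inductive pauli := PI | PX | PY | PZ.

Definition pauli_code (p : pauli) : bool * bool :=
  match p with PI => (false, false) | PX => (true, false)
             | PY => (true, true) | PZ => (false, true) end.
Definition pauli_decode (c : bool * bool) : pauli :=
  match c with (false, false) => PI | (true, false) => PX
             | (true, true) => PY | (false, true) => PZ end.
Lemma pauli_codeK : cancel pauli_code pauli_decode. Proof. by case. Qed.
HB.instance Definition _ := Finite.copy pauli (can_type pauli_codeK).

Definition pmul (p q : pauli) : pauli :=
  match p, q with
  | PI, r | r, PI => r
  | PX, PX | PY, PY | PZ, PZ => PI
  | PX, PY | PY, PX => PZ
  | PY, PZ | PZ, PY => PX
  | PZ, PX | PX, PZ => PY
  end.

Definition pcommute (p q : pauli) : bool :=
  (p == PI) || (q == PI) || (p == q).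

Inductive kind := KP | KF .

(* a coordinate value: a Pauli (for P^1 factors) or a bit (for F_2 factors) *)
Definition coord := (pauli + bool)%type.

Definition okc (k : kind) (c : coord) : bool :=
  match k, c with KP, inl _ | KF, inr _ => true | _, _ => false end.

Definition cmul (c d : coord) : coord :=
  match c, d with
  | inl p, inl q => inl (pmul p q)
  | inr x, inr y => inr (x (+) y)
  | _, _ => c (* never used: both arguments lie in the same factor *)
  end.

Definition cid (c : coord) : bool :=
  match c with inl p => p == PI | inr x => ~~ x end.

Definition A (n : nat) (t : 'I_n -> kind) :=
  {f : {ffun 'I_n -> coord} | [forall i, okc (t i) (f i)]}.

Lemma amul_ok n (t : 'I_n -> kind) (a b : A t) :
  [forall i, okc (t i) ([ffun i => cmul (val a i) (val b i)] i)].
Proof.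
apply/forallP => i; rewrite ffunE.
have := forallP (valP a) i; have := forallP (valP b) i.
by case: (t i); case: (val a i); case: (val b i).
Qed.

Definition amul n (t : 'I_n -> kind) (a b : A t) : A t :=
  exist (fun f : {ffun 'I_n -> coord} => [forall i, okc (t i) (f i)]) _ (amul_ok a b).

(* group inverse: every element of A is an involution *)
Definition ainv n (t : 'I_n -> kind) (a : A t) : A t := a.

Definition supp n (t : 'I_n -> kind) (a : A t) : {set 'I_n} :=
  [set i | ~~ cid (val a i)].
Definition weight n (t : 'I_n -> kind) (a : A t) : nat := #|supp a|.

Definition suble n (t : 'I_n -> kind) (b a : A t) : bool :=
  [forall i, cid (val b i) || (val b i == val a i)].

Local Open Scope ring_scope.

Definition cbichar (R : nzRingType) (c d : coord) : R :=
  match c, d with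
  | inl p, inl q => if pcommute p q then 1 else -1
  | inr x, inr y => if x && y then -1 else 1
  | _, _ => 1
  end.

Definition bichar (R : nzRingType) n (t : 'I_n -> kind) (a b : A t) : R :=
  \prod_(i < n) cbichar R (val a i) (val b i).

Definition conv (R : nzRingType) n (t : 'I_n -> kind) (f g : A t -> R) : A t -> R :=
  fun a => \sum_(b : A t) f b * g (amul a (ainv b)).

Definition is_distr (R : numDomainType) n (t : 'I_n -> kind) (f : A t -> R) :=
  (forall e, 0 <= f e) /\ \sum_(e : A t) f e = 1.

Definition aone n (t : 'I_n -> kind) (a : A t) : bool := [forall i, cid (val a i)].
Definition delta1 (R : nzRingType) n (t : 'I_n -> kind) : A t -> R :=
  fun a => if aone a then 1 else 0.

Definition convprod (R : nzRingType) n (t : 'I_n -> kind)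
    (Gamma : {set {set 'I_n}}) (P : {set 'I_n} -> A t -> R) : A t -> R :=
  \big[@conv R n t / @delta1 R n t]_(g in Gamma) P g.

Definition moment (R : nzRingType) n (t : 'I_n -> kind) (P : A t -> R) : A t -> R :=
  fun a => \sum_(e : A t) bichar R a e * P e.

Definition mobius n (t : 'I_n -> kind) (b a : A t) : int :=
  (-1) ^+ (weight a - weight b)%N.

Definition canon (R : fieldType) n (t : 'I_n -> kind) (E : A t -> R) : A t -> R :=
  fun a => \prod_(b : A t | suble b a) E b ^ mobius b a.

(* Main.v *)
Require Import Defs.
From HB Require Import structures.
From mathcomp Require Import all_boot all_order all_algebra.
From mathcomp Require Import ring.
Import Order.TTheory GRing.Theory Num.Theory.
Set Implicit Arguments. Unset Strict Implicit. Unset Printing Implicit Defensive.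
Local Open Scope ring_scope.

Section Aux.
Variables (n : nat) (t : 'I_n -> kind).

Definition idc (k : kind) : Defs.coord := match k with KP => inl PI | KF => inr false end.

Lemma okA (a : A t) i : okc (t i) (val a i).
Proof. exact: (forallP (valP a) i). Qed.

Lemma cid_idc (a : A t) i : cid (val a i) -> val a i = idc (t i).
Proof. by have := okA a i; case: (t i); case: (val a i) => [[]|[]]. Qed.

Lemma cid_idc' k : cid (idc k). Proof. by case: k. Qed.

Lemma okc_idc k : okc k (idc k). Proof. by case: k. Qed.

Lemma amulK (e b : A t) : amul (amul e b) b = e.
Proof.
apply: val_inj; apply/ffunP => i; rewrite /= !ffunE.
case: (val e i) => [p|x]; case: (val b i) => [q|y] //=.
  by case: p; case: q.
by rewrite -addbA addbb addbF.
Qed.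

Lemma bichar_mul (R : comNzRingType) (a e b : A t) :
  bichar R a (amul e b) = bichar R a e * bichar R a b.
Proof.
rewrite /bichar -big_split; apply: eq_bigr => i _ /=; rewrite ffunE.
have := okA a i; have := okA e i; have := okA b i.
case: (t i); case: (val a i) => [p|x]; case: (val e i) => [q|y];
  case: (val b i) => [r|z] //= _ _ _.
  by case: p; case: q; case: r; rewrite /pcommute /= ?mulr1 ?mul1r ?mulrNN ?mulr1.
by case: x; case: y; case: z; rewrite /= ?mulr1 ?mul1r ?mulrNN ?mulr1.
Qed.

Lemma cbichar_cid (R : nzRingType) c d : cid d -> cbichar R c d = 1.
Proof.
case: c => [p|x]; case: d => [q|y] //=.
  by move/eqP->; rewrite /pcommute eqxx orbT.
by move/negbTE->; rewrite andbF.
Qed.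

Definition aid : A t :=
  exist (fun f : {ffun 'I_n -> Defs.coord} => [forall i, okc (t i) (f i)])
    [ffun i => idc (t i)] (introT forallP (fun i => etrans (congr1 _ (ffunE _ _)) (okc_idc (t i)))).

Lemma aoneP (e : A t) : aone e = (e == aid).
Proof.
apply/idP/eqP => [/forallP H|->].
  by apply: val_inj; apply/ffunP => i; rewrite ffunE; apply: cid_idc.
by apply/forallP => i; rewrite /= ffunE cid_idc'.
Qed.

Lemma moment_delta (R : nzRingType) (a : A t) : moment (@delta1 R n t) a = 1.
Proof.
rewrite /moment (bigD1 aid) //= big1 => [|e /negbTE He]; last first.
  by rewrite /delta1 aoneP He mulr0.
rewrite /delta1 aoneP eqxx mulr1 addr0 /bichar big1 // => i _.
by apply: cbichar_cid; rewrite /= ffunE cid_idc'.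
Qed.

Lemma moment_conv (R : comNzRingType) (f g : A t -> R) (a : A t) :
  moment (conv f g) a = moment f a * moment g a.
Proof.
rewrite /moment /conv.
under eq_bigr do rewrite mulr_sumr.
rewrite exchange_big /= mulr_suml; apply: eq_bigr => b _.
have inj : injective (fun e : A t => amul e b) by apply: (can_inj (g := fun e => amul e b)) => e; apply: amulK.
rewrite (reindex_inj inj) /= mulr_sumr.
apply: eq_bigr => e _; rewrite /ainv amulK bichar_mul.
by ring.
Qed.


Lemma suble_cases (b a : A t) i : suble b a -> val b i = idc (t i) \/ val b i = val a i.
Proof.
move/forallP/(_ i)/orP => [/cid_idc|/eqP]; by [left|right].
Qed.

Lemma suble_refl (a : A t) : suble a a.
Proof. by apply/forallP => i; rewrite eqxx orbT. Qed.

Lemma suble_trans (c b a : A t) : suble c b -> suble b a -> suble c a.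
Proof.
move=> /forallP cb /forallP ba; apply/forallP => i.
case/orP: (cb i) => [->//|/eqP ->]; exact: ba.
Qed.

Lemma suble_anti (b a : A t) : suble b a -> suble a b -> b = a.
Proof.
move=> ba ab; apply: val_inj; apply/ffunP => i.
case: (suble_cases i ba) => // bi; case: (suble_cases i ab) => // ai.
by rewrite bi ai.
Qed.

Lemma suble_supp (b a : A t) : suble b a -> supp b \subset supp a.
Proof.
move=> ba; apply/subsetP => i; rewrite !inE.
by case: (suble_cases i ba) => ->; rewrite ?cid_idc'.
Qed.

Lemma suble_weight (b a : A t) : suble b a -> (weight b <= weight a)%N.
Proof. by move/suble_supp/subset_leq_card. Qed.

Definition togf (a : A t) i (b : A t) : {ffun 'I_n -> Defs.coord} :=
  [ffun j => if j == i then
     (if val b i == val a i then idc (t i)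
      else if val b i == idc (t i) then val a i else val b i)
   else val b j].

Definition toggle (a : A t) i (b : A t) : A t := insubd b (togf a i b).

Lemma val_toggle (a : A t) i (b : A t) j : val (toggle a i b) j =
  if j == i then
     (if val b i == val a i then idc (t i)
      else if val b i == idc (t i) then val a i else val b i)
   else val b j.
Proof.
rewrite /toggle val_insubd ifT ?ffunE //.
apply/forallP => k; rewrite ffunE; case: eqP => [->|_]; last exact: okA.
case: ifP => _; first exact: okc_idc.
case: ifP => _; exact: okA.
Qed.

Lemma idc_neq (a : A t) i : ~~ cid (val a i) -> (idc (t i) == val a i) = false.
Proof. by move=> H; apply/negbTE; apply: contra H => /eqP <-; rewrite cid_idc'. Qed.

Lemma toggleK (a : A t) i b : ~~ cid (val a i) -> toggle a i (toggle a i b) = b.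
Proof.
move=> H; apply: val_inj; apply/ffunP => j; rewrite !val_toggle.
case: eqP => // ->; rewrite eqxx.
have nai := idc_neq H.
case: (eqVneq (val b i) (val a i)) => [->|ne1]; first by rewrite nai eqxx.
case: (eqVneq (val b i) (idc (t i))) => [->|ne2]; first by rewrite eqxx.
by rewrite (negbTE ne1) (negbTE ne2).
Qed.

Lemma supp_toggle (a : A t) i (b : A t) : ~~ cid (val a i) -> val b i = idc (t i) ->
  supp (toggle a i b) = i |: supp b.
Proof.
move=> H bi; apply/setP => j; rewrite in_setU1 !inE val_toggle.
case: eqP => [->|_] //=; by rewrite bi idc_neq // eqxx.
Qed.

Lemma weight_toggle (a : A t) i (b : A t) : ~~ cid (val a i) -> val b i = idc (t i) ->
  weight (toggle a i b) = (weight b).+1.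
Proof.
move=> H bi; rewrite /weight supp_toggle // cardsU1 inE bi cid_idc'.
by rewrite add1n.
Qed.

Lemma toggle_suble (a : A t) i (b : A t) : ~~ cid (val a i) -> suble b a -> suble (toggle a i b) a.
Proof.
move=> H ba; apply/forallP => j; rewrite val_toggle.
case: eqP => [->|_]; last exact: (forallP ba j).
case: (suble_cases i ba) => ->; first by rewrite idc_neq // eqxx eqxx orbT.
by rewrite eqxx cid_idc'.
Qed.

Lemma toggle_suble2 (c a : A t) i (b : A t) : cid (val c i) -> suble c b -> suble c (toggle a i b).
Proof.
move=> H cb; apply/forallP => j; rewrite val_toggle.
have [->|ne] := eqVneq j i; first by rewrite H.
exact: (forallP cb j).
Qed.

Lemma toggle_Q (a : A t) i b : ~~ cid (val a i) -> suble b a ->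
  (val (toggle a i b) i == idc (t i)) = ~~ (val b i == idc (t i)).
Proof.
move=> H ba; rewrite val_toggle eqxx.
case: (suble_cases i ba) => ->.
  by rewrite idc_neq // eqxx eq_sym idc_neq.
by rewrite eqxx eqxx eq_sym idc_neq.
Qed.

End Aux.

Lemma big_invol (R : Type) (idx : R) (op : Monoid.com_law idx) (T : finType)
  (P Q : pred T) (tau : T -> T) (F : T -> R) :
  (forall b, tau (tau b) = b) -> (forall b, P b -> P (tau b)) ->
  (forall b, P b -> Q (tau b) = ~~ Q b) ->
  (forall b, P b -> Q b -> op (F b) (F (tau b)) = idx) ->
  \big[op/idx]_(b | P b) F b = idx.
Proof.
move=> K PP PQ H.
rewrite (bigID Q) /=.
rewrite [X in op _ X](reindex_inj (can_inj K)) /=.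
have -> : \big[op/idx]_(b | P (tau b) && ~~ Q (tau b)) F (tau b) =
          \big[op/idx]_(b | P b && Q b) F (tau b).
  apply: eq_bigl => b; case Pb: (P b).
    by rewrite PP // PQ // negbK.
  apply/negbTE/negP => /andP [Pt _]; have := PP _ Pt; by rewrite K Pb.
rewrite -big_split big1 // => b /andP[]; exact: H.
Qed.

Section Main.
Variables (n : nat) (t : 'I_n -> kind).

Lemma prod_exprz (R : fieldType) (I : finType) (P : pred I) (x : R) (f : I -> int) :
  x != 0 -> \prod_(i | P i) x ^ f i = x ^ (\sum_(i | P i) f i).
Proof.
move=> nz; rewrite (big_morph (fun z : int => x ^ z) (fun m k => expfzDr m k nz) (expr0z x)) //.
Qed.

Lemma prod_exprzl (R : fieldType) (I : finType) (P : pred I) (x : I -> R) (z : int) :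
  (\prod_(i | P i) x i) ^ z = \prod_(i | P i) x i ^ z.
Proof.
apply: (big_morph (fun y => y ^ z) (fun u v => expfzMl u v z) (exp1rz _ z)).
Qed.

Lemma sum_mobius (c a : A t) : suble c a ->
  \sum_(b | suble b a && suble c b) mobius c b = if c == a then 1 else 0.
Proof.
move=> ca; case: eqVneq => [->|ne].
  rewrite (eq_bigl (pred1 a)) ?big_pred1_eq /mobius ?subnn ?expr0 // => b /=.
  apply/andP/eqP => [[]|->]; first exact: suble_anti.
  by split; apply: suble_refl.
case/boolP: [exists i, val c i != val a i] => [/existsP[i Hi]|/existsPn H]; last first.
  by case/eqP: ne; apply: val_inj; apply/ffunP => i; apply/eqP/negPn/H.
have ci : cid (val c i).
  by case/orP: (forallP ca i) => // /eqP E; rewrite E eqxx in Hi.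
have ai : ~~ cid (val a i).
  apply: contra Hi => ai; by rewrite (cid_idc ci) (cid_idc ai).
apply: (big_invol (P := fun b => suble b a && suble c b) (F := mobius c) (tau := toggle a i) (Q := fun b => val b i == idc (t i))).
- by move=> b; apply: toggleK.
- move=> b /andP[ba cb]; apply/andP; split; first exact: toggle_suble.
  exact: toggle_suble2.
- by move=> b /andP[ba _]; apply: toggle_Q.
- move=> b /andP[ba cb] /eqP bi.
  rewrite /mobius weight_toggle // subSn ?suble_weight // exprS mulN1r.
  by apply: subrr.
Qed.

Lemma mobius_inv (R : fieldType) (E : A t -> R) : (forall b, E b != 0) ->
  forall a, E a = \prod_(b | suble b a) canon E b.
Proof.
move=> nz a; rewrite /canon.
rewrite (exchange_big_dep (fun c => suble c a)) /=; last first.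
  by move=> b c ba cb; apply: suble_trans cb ba.
under eq_bigr => c Hc do rewrite (prod_exprz _ _ (nz c)) (sum_mobius Hc).
rewrite (bigD1 a) ?suble_refl //= eqxx expr1z big1 ?mulr1 // => c /andP[_ /negbTE ->].
by rewrite expr0z.
Qed.

Lemma canon_local (R : fieldType) (E : A t -> R) (g : {set 'I_n}) (a : A t) :
  (forall b : A t, E b != 0) ->
  (forall b b' : A t, (forall j, j \in g -> val b j = val b' j) -> E b = E b') ->
  ~~ (supp a \subset g) -> canon E a = 1.
Proof.
move=> nz loc /subsetPn[i ia ig]; rewrite inE in ia.
rewrite /canon.
apply: (big_invol (P := fun b => suble b a) (F := fun b => E b ^ mobius b a) (tau := toggle a i) (Q := fun b => val b i == idc (t i))).
- by move=> b; apply: toggleK.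
- by move=> b ba; apply: toggle_suble.
- by move=> b ba; apply: toggle_Q.
- move=> b ba /eqP bi.
  have -> : E (toggle a i b) = E b.
    apply: loc => j jg; rewrite val_toggle; have [ji|//] := eqVneq j i.
    by move: jg; rewrite ji (negbTE ig).
  have wl : (weight b < weight a)%N.
    by rewrite -(weight_toggle ia bi); apply/suble_weight/toggle_suble.
  rewrite /mobius weight_toggle // -(subnSK wl) exprS mulN1r.
  rewrite /= -invr_expz; apply: mulVf; exact: expfz_neq0.
Qed.

End Main.

Theorem lemma5 (R : realFieldType) (n : nat) (t : 'I_n -> kind)
    (Gamma : {set {set 'I_n}}) (Pg : {set 'I_n} -> A t -> R) :
  (forall g, g \in Gamma -> is_distr (Pg g)) ->
  (forall g, g \in Gamma -> forall e : A t, ~~ (supp e \subset g) -> Pg g e = 0) ->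
  let P := convprod Gamma Pg in
  let E := moment P in
  (forall a : A t, E a != 0) ->
  let F := canon E in
  (forall a : A t, E a = \prod_(b : A t | suble b a) F b) /\
  (forall a : A t, (forall g, g \in Gamma -> ~~ (supp a \subset g)) -> F a = 1).
Proof.
move=> Hd Hs P E nzE F; split; first exact: mobius_inv.
have Eprod : forall a, E a = \prod_(g in Gamma) moment (Pg g) a.
  move=> a; rewrite /E /P /convprod.
  exact: (big_morph (fun f => moment f a) (fun f g => moment_conv f g a) (moment_delta _ a)).
have nzg : forall g, g \in Gamma -> forall b, moment (Pg g) b != 0.
  move=> g gG b; have := nzE b; rewrite Eprod => /prodf_neq0; exact.
move=> a Ha; rewrite /F /canon.
under eq_bigr => b _ do rewrite Eprod prod_exprzl.
rewrite exchange_big /= big1 // => g gG.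
apply: (canon_local (g := g)); [exact: nzg| |exact: Ha].
move=> b b' agree; rewrite /moment; apply: eq_bigr => e _.
case: (boolP (supp e \subset g)) => sg; last by rewrite Hs // !mulr0.
congr (_ * _); rewrite /bichar; apply: eq_bigr => j _.
case: (boolP (j \in g)) => jg; first by rewrite agree.
have je : j \notin supp e by apply: contra jg => /(subsetP sg).
rewrite inE negbK in je.
by rewrite !cbichar_cid.
Qed.
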